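(* Let $l\ge1$. For all $\alpha,\beta\ge1$, $\widetilde\epsilon_{t^l}(\mathcal{Q}_{\alpha,\beta})\subset\mathcal{P}_{\alpha',\beta'}$, where $\alpha'=\alpha+(n-1)l\beta$ and $\beta'=\beta$.
   Context: Let $k$ be a field of characteristic zero, $n\ge3$, $k[t,\mathbf{x}]=k[t,x_1,\ldots,x_n]$. Let $\widetilde D=\sum_{j=1}^{n-1}(n-j)\,x_{j+1}\,\partial/\partial x_j$ as a derivation of $k[t,\mathbf{x}]$ killing $t$, and $\widetilde\epsilon_{t^l}=\exp(t^l\widetilde D)$, $\exp E(g)=\sum_{i\ge0}E^i(g)/i!$. For nonzero $p=\sum u_{i_0,\ldots,i_n}t^{i_0}x_1^{i_1}\cdots x_n^{i_n}$, $\mathrm{supp}(p)$ is the set of exponent vectors with nonzero coefficient, $\deg_{\mathbf w}(p)=\max\{\sum_j i_jw_j:(i_0,\ldots,i_n)\in\mathrm{supp}(p)\}$, and $\mathrm{lt}(p)$ is the leading term for the lexicographic order with $t>x_1>\cdots>x_n$. Let $\mathbf{w}_1=(1,\ldots,1)$, $\mathbf{w}_2$ the weight with $n-2$ on $t$ and $2n-j-1$ on $x_j$, and $\mathbf{w}_3$ the weight with $0$ on $t$ and $1$ on each $x_j$. For $\alpha,\beta\ge1$: $\mathcal{P}_{\alpha,\beta}$ is the set of nonzero $p$ with $\deg_{\mathbf{w}_1}(p)\le\alpha+\beta$, $\deg_{\mathbf{w}_2}(p)\le(n-2)\alpha+(n-1)\beta$ and $\mathrm{lt}(p)\in k^*t^\alpha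 x_n^\beta$; $\mathcal{Q}_{\alpha,\beta}$ is the set of nonzero $p$ with $\deg_{\mathbf{w}_3}(p)\le\beta$ and $\mathrm{lt}(p)\in k^*t^\alpha x_1^\beta$. *)

(* Defs.v *)
From HB Require Import structures.
From mathcomp Require Import all_boot all_order all_algebra.
From mathcomp Require Import mpoly.
Set Implicit Arguments. Unset Strict Implicit. Unset Printing Implicit Defensive.
Import Order.TTheory GRing.Theory Num.Theory.
Local Open Scope ring_scope.

(* Convention: k[t, x_1, ..., x_n] is {mpoly k[n.+1]}; variable 0 is t and
   variable j (1 <= j <= n) is x_j. *)

Section Defs.
Variables (k : fieldType) (n : nat).

Local Notation P := {mpoly k[n.+1]}.

Definition Dtilde (p : P) : P :=
  \sum_(j < n.+1 | (0 < j < n)%N)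
     ((n - j)%:R * 'X_(inord j.+1) * mderiv j p).

Definition tlD (l : nat) (p : P) : P := 'X_(ord0) ^+ l * Dtilde p.

(* exp(t^l D~)(p) = sum_{i>=0} (t^l D~)^i(p)/i!.  D~ is locally nilpotent:
   (t^l D~)^i(p) = 0 as soon as i > n * deg p, so the series is the finite
   sum below (the bound (msize p * n) exceeds n * deg p). *)
Definition eps_t (l : nat) (p : P) : P :=
  \sum_(i < (msize p * n).+1) ((i`!%:R)^-1 *: iter i (tlD l) p).

Definition wdeg (w : nat -> nat) (p : P) : nat :=
  \max_(m <- msupp p) (\sum_(i < n.+1) (m i * w i))%N.

Definition w1 (i : nat) : nat := 1.
Definition w2 (i : nat) : nat := if i == 0%N then (n - 2)%N else (2 * n - i - 1)%N.
Definition w3 (i : nat) : nat := if i == 0%N then 0%N else 1%N.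

Definition lexlt (m1 m2 : 'X_{1..n.+1}) : Prop :=
  exists i : 'I_n.+1, (forall j : 'I_n.+1, (j < i)%N -> m1 j = m2 j) /\ (m1 i < m2 i)%N.

Definition lt_is (p : P) (m0 : 'X_{1..n.+1}) : Prop :=
  m0 \in msupp p /\ forall m, m \in msupp p -> m <> m0 -> lexlt m m0.

Definition mon_t_x (a j b : nat) : 'X_{1..n.+1} :=
  [multinom (if i == 0%N :> nat then a else if i == j :> nat then b else 0%N) | i < n.+1].

Definition inPab (a b : nat) (p : P) : Prop :=
  [/\ p != 0,
      (wdeg w1 p <= a + b)%N,
      (wdeg w2 p <= (n - 2) * a + (n - 1) * b)%N &
      lt_is p (mon_t_x a n b)].

Definition inQab (a b : nat) (p : P) : Prop :=
  [/\ p != 0, (wdeg w3 p <= b)%N & lt_is p (mon_t_x a 1 b)].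

End Defs.

(* Main.v *)
Require Import Defs.
From HB Require Import structures.
From mathcomp Require Import all_boot all_order all_algebra.
From mathcomp Require Import mpoly.
From mathcomp Require Import zify.
From Stdlib Require Import Lia.
Set Implicit Arguments. Unset Strict Implicit. Unset Printing Implicit Defensive.
Import Order.TTheory GRing.Theory Num.Theory.
Local Open Scope ring_scope.

Section Aux.
Variables (n : nat).
Local Notation M := ('X_{1..n.+1}).

Definition F (w : nat -> nat) (m : M) : nat := (\sum_(i < n.+1) (m i * w i))%N.

Lemma F_add w (m1 m2 : M) : F w (m1 + m2)%MM = (F w m1 + F w m2)%N.
Proof. by rewrite /F -big_split; apply: eq_bigr => i _; rewrite mnmDE mulnDl. Qed.

Lemma F_U w (j : 'I_n.+1) : F w U_(j)%MM = w j.
Proof.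
rewrite /F (bigD1 j) //= mnm1E eqxx mul1n big1 ?addn0 // => i hi.
by rewrite mnm1E eq_sym (negbTE hi).
Qed.

Lemma F_mul w (m : M) l : F w (m *+ l)%MM = (F w m * l)%N.
Proof.
rewrite /F big_distrl /=; apply: eq_bigr => i _; rewrite mulmnE; lia.
Qed.

Lemma F_le (w1 w2 : nat -> nat) (m : M) : (forall i : 'I_n.+1, w1 i <= w2 i)%N -> (F w1 m <= F w2 m)%N.
Proof. by move=> h; apply: leq_sum => i _; rewrite leq_mul2l h orbT. Qed.

Lemma sum_ind (j0 : 'I_n.+1) (f : 'I_n.+1 -> nat) :
  (\sum_(i < n.+1) ((val i == val j0) * f i))%N = f j0.
Proof.
rewrite (bigD1 j0) //= eqxx mul1n big1 ?addn0 // => i hi.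
by rewrite val_eqE (negbTE hi).
Qed.


Definition T (m : M) : nat := m ord0.
Definition S (m : M) : nat := F w3 m.
Definition Wt (m : M) : nat := F id m.

Lemma L_w1 (m : M) : F w1 m = (T m + S m)%N.
Proof.
rewrite /T /S /F -(sum_ind ord0 (fun i => m i)) -big_split /=.
apply: eq_bigr => i _; rewrite /w1 /w3; case: i => [[|i] hi] /=; lia.
Qed.

Lemma L_w2 (m : M) : (F (w2 n) m + Wt m = (n - 2) * T m + (2 * n - 1) * S m)%N.
Proof.
rewrite /T /S /Wt /F -(sum_ind ord0 (fun i => m i)) -big_split /= !big_distrr -big_split /=.
apply: eq_bigr => i _; rewrite /w2 /w3; case: i => [[|i] hi] /=; first lia.
rewrite -mulnDr; have -> : (2 * n - i.+1 - 1 + i.+1 = 2 * n - 1)%N by lia. lia.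
Qed.

Lemma I1 (m : M) : (S m <= Wt m)%N.
Proof. apply: F_le => i; rewrite /w3; case: i => [[|i] hi] /=; lia. Qed.

Lemma I2 (m : M) : (Wt m <= n * S m)%N.
Proof.
rewrite /Wt /S /F big_distrr /=; apply: leq_sum => i _.
rewrite /w3; case: i => [[|i] hi] /=; nia.
Qed.

Lemma I3 (m : M) : (1 < n)%N -> (2 * S m <= Wt m + m (inord 1))%N.
Proof.
move=> hn; rewrite -(sum_ind (inord 1) (fun i => m i)) /Wt /S /F big_distrr -big_split /=.
apply: leq_sum => i _; rewrite inordK; last lia.
rewrite /w3; case: i => [[|[|i]] hi] /=; nia.
Qed.

Lemma I4 (m : M) (j : 'I_n.+1) : (0 < j < n)%N -> (Wt m + m j <= n * S m)%N.
Proof.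
move=> hj; rewrite -(sum_ind j (fun i => m i)) /Wt /S /F big_distrr -big_split /=.
apply: leq_sum => i _; rewrite /w3; case: i => [[|i] hi] /=.
  have -> : (0 == j)%N = false by lia. nia.
case: eqP => e; nia.
Qed.

End Aux.

Lemma num2 n' l' T a s b W i F2 :
 (T <= a -> s <= b -> s <= W -> i <= (n'+2) * s ->
 F2 + (W + i) = (n'+1) * (T + i * (l'+1)) + (2 * n'+5) * s ->
 F2 <= (n'+1) * (a + (n'+2) * (l'+1) * b) + (n'+2) * b)%N.
Proof.
move=> h1 h2 h3 h4 e.
have h5 : ((n'+1) * T <= (n'+1) * a)%N by rewrite leq_mul2l h1 orbT.
have h6 : (i * (n' * l'+n'+l') <= (n'+2) * s * (n' * l'+n'+l'))%N by rewrite leq_mul2r h4 orbT.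
have h7 : ((n'+2) * s * (n' * l'+n'+l') <= (n'+2) * b * (n' * l'+n'+l'))%N by rewrite leq_mul2r leq_mul2l h2 !orbT.
have h8 : ((n'+2) * s <= (n'+2) * b)%N by rewrite leq_mul2l h2 orbT.
lia.
Qed.

Lemma num2' n l T a s b W i F2 : (3 <= n)%N -> (1 <= l)%N ->
 (T <= a -> s <= b -> s <= W -> i <= (n-1) * s ->
 F2 + (W + i) = (n-2) * (T + i * l) + (2 * n-1) * s ->
 F2 <= (n-2) * (a + (n-1) * l * b) + (n-1) * b)%N.
Proof.
move=> hn hl; have [n' ->] : exists n', n = (n' + 3)%N by exists (n - 3)%N; lia.
have [l' ->] : exists l', l = (l' + 1)%N by exists (l - 1)%N; lia.
have -> : (n' + 3 - 2 = n' + 1)%N by lia.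
have -> : (n' + 3 - 1 = n' + 2)%N by lia.
have -> : (2  *  (n' + 3) - 1 = 2  *  n' + 5)%N by lia.
exact: num2.
Qed.

Lemma num1 n s W i : (1 <= n)%N -> (s <= W)%N -> (W + i <= n  *  s)%N -> (i <= (n - 1)  *  s)%N.
Proof.
move=> hn; have [n' ->] : exists n', n = (n' + 1)%N by exists (n - 1)%N; lia.
have -> : (n' + 1 - 1 = n')%N by lia. lia.
Qed.

Lemma numT n l T a s b i : (T <= a)%N -> (i <= (n-1) * s)%N -> (s <= b)%N ->
  (T + i  *  l <= a + (n-1) * l * b)%N /\ (T + i  *  l + s <= a + (n-1) * l * b + b)%N.
Proof.
move=> h1 h2 h3.
have h4 : (i  *  l <= (n-1) * s * l)%N by rewrite leq_mul2r h2 orbT.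
have h5 : ((n-1) * s * l <= (n-1) * b * l)%N by rewrite leq_mul2r leq_mul2l h3 !orbT.
split; lia.
Qed.

Lemma numTop n l T a s b i : (2 <= n)%N -> (1 <= l)%N -> (T <= a)%N -> (i <= (n-1) * s)%N -> (s <= b)%N ->
  (T + i  *  l = a + (n-1) * l * b)%N -> [/\ i = ((n-1) * b)%N, T = a & s = b].
Proof.
move=> hn hl h1 h2 h3 e.
have h4 : (i  *  l <= (n-1) * s * l)%N by rewrite leq_mul2r h2 orbT.
have h5 : ((n-1) * s * l <= (n-1) * b * l)%N by rewrite leq_mul2r leq_mul2l h3 !orbT.
have e1 : (i  *  l = (n-1) * b * l)%N by lia.
have e2 : ((n-1) * s * l = (n-1) * b * l)%N by lia.
move/eqP: e1; rewrite eqn_pmul2r // => /eqP e1.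
move/eqP: e2; rewrite eqn_pmul2r // eqn_pmul2l; last lia.
move/eqP => e2; split => //; lia.
Qed.

Lemma numW n b W : (1 <= n)%N -> (b <= W)%N -> (W + (n-1) * b <= n  *  b)%N -> W = b.
Proof.
move=> hn; have [n' ->] : exists n', n = (n' + 1)%N by exists (n - 1)%N; lia.
have -> : (n' + 1 - 1 = n')%N by lia. lia.
Qed.

Section Poly.
Variables (k : fieldType) (n : nat).
Local Notation M := ('X_{1..n.+1}).
Local Notation P := {mpoly k[n.+1]}.

Lemma T_F (m : M) : T m = F (fun i => nat_of_bool (i == 0)%N) m.
Proof.
rewrite /T /F -(sum_ind ord0 (fun i => m i)); apply: eq_bigr => i _; by rewrite mulnC.
Qed.

Lemma mcoeffXM (u : M) (r : P) m :
  ('X_[u] * r)@_m = if (u <= m)%MM then r@_(m - u)%MM else 0.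
Proof.
case: ifP => h.
  by rewrite mulrC -[X in _@_X](submK h) addmC mcoeffMX.
apply/eqP; rewrite mcoeff_eq0; apply/negP; rewrite mulrC.
rewrite (perm_mem (msuppMX _ _)) => /mapP [m' _ e].
by move: h; rewrite e lem_addr.
Qed.

Lemma coefD (q : P) (m : M) : (Dtilde q)@_m =
  \sum_(j < n.+1 | (0 < j < n)%N)
     (if (U_(inord j.+1) <= m)%MM
      then q@_(m - U_(inord j.+1) + U_(j))%MM *+ ((m - U_(inord j.+1))%MM j).+1 *+ (n - j)
      else 0).
Proof.
rewrite /Dtilde raddf_sum; apply: eq_bigr => j _.
rewrite -mulrA mulr_natl raddfMn /= mcoeffXM; case: ifP => _; last by rewrite mul0rn.
by rewrite mcoeff_deriv.
Qed.

Lemma coefT l (q : P) (m : M) : (tlD l q)@_m =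
  if (U_(ord0) *+ l <= m)%MM then (Dtilde q)@_(m - U_(ord0) *+ l)%MM else 0.
Proof. by rewrite /tlD mpolyXn mcoeffXM. Qed.

Lemma Dtilde_add (x y : P) : Dtilde (x + y) = Dtilde x + Dtilde y.
Proof. by rewrite /Dtilde -big_split; apply: eq_bigr => j _; rewrite mderivD mulrDr. Qed.

Lemma Dtilde_scale c (x : P) : Dtilde (c *: x) = c *: Dtilde x.
Proof.
rewrite /Dtilde scaler_sumr; apply: eq_bigr => j _.
by rewrite linearZ /= scalerAr.
Qed.

Lemma tlD_add l (x y : P) : tlD l (x + y) = tlD l x + tlD l y.
Proof. by rewrite /tlD Dtilde_add mulrDr. Qed.

Lemma tlD_scale l c (x : P) : tlD l (c *: x) = c *: tlD l x.
Proof. by rewrite /tlD Dtilde_scale scalerAr. Qed.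

Lemma iter_add l i (x y : P) : iter i (tlD l) (x + y) = iter i (tlD l) x + iter i (tlD l) y.
Proof. by elim: i => //= i ->; rewrite tlD_add. Qed.

Lemma iter_scale l i c (x : P) : iter i (tlD l) (c *: x) = c *: iter i (tlD l) x.
Proof. by elim: i => //= i ->; rewrite tlD_scale. Qed.

Lemma sum_neq0 (I : finType) (Pr : pred I) (f : I -> k) :
  \sum_(i | Pr i) f i != 0 -> exists i, Pr i && (f i != 0).
Proof.
move=> h; case: (pickP (fun i => Pr i && (f i != 0))) => [i hi|h0]; first by exists i.
move: h; rewrite big1 ?eqxx // => i hP; move: (h0 i); rewrite hP /=.
by move/negbFE/eqP.
Qed.

Lemma FU3 (w : nat -> nat) (mm : M) (j : 'I_n.+1) l : (j < n)%N ->
  F w (mm + U_(inord j.+1) + U_(ord0) *+ l)%MM = (F w mm + w j.+1 + w 0 * l)%N.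
Proof. by move=> hj; rewrite !F_add F_mul !F_U inordK. Qed.

Lemma step_supp l (q : P) (m : M) : (tlD l q)@_m != 0 ->
  exists m0 : M, [/\ q@_m0 != 0, T m = (T m0 + l)%N, S m = S m0 & Wt m = (Wt m0).+1].
Proof.
rewrite coefT; case: ifP => hl; last by rewrite eqxx.
rewrite coefD => /sum_neq0 [j /andP [/andP [j0 jn]]].
case: ifP => hU; last by rewrite eqxx.
set mm := (m - U_(ord0) *+ l - U_(inord j.+1))%MM.
have em : m = (mm + U_(inord j.+1) + U_(ord0) *+ l)%MM by rewrite /mm !submK.
move=> /eqP h; exists (mm + U_(j))%MM; split.
- by apply/eqP => h0; apply: h; rewrite h0 !mul0rn.
- by rewrite em !T_F FU3 // F_add F_U /=; move: j0; case: (nat_of_ord j) => //=; lia.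
- by rewrite em /S FU3 // F_add F_U /w3 /=; move: j0; case: (nat_of_ord j) => //=; lia.
- by rewrite em /Wt FU3 // F_add F_U /=; lia.
Qed.

Lemma iter_supp l i (q : P) (m : M) : (iter i (tlD l) q)@_m != 0 ->
  exists m0 : M, [/\ q@_m0 != 0, T m = (T m0 + i * l)%N, S m = S m0 & Wt m = (Wt m0 + i)%N].
Proof.
elim: i m => [|i IH] m /=; first by move=> h; exists m; rewrite !addn0.
move=> /step_supp [m1 [h1 e1 e2 e3]]; have [m0 [h0 f1 f2 f3]] := IH _ h1.
exists m0; split => //; [rewrite e1 f1 | rewrite e2 f2 | rewrite e3 f3]; lia.
Qed.

End Poly.

Section Nat.
Variables (k : fieldType) (n : nat).
Local Notation M := ('X_{1..n.+1}).
Local Notation P := {mpoly k[n.+1]}.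

Definition natset (x : k) := exists c : nat, x = c%:R.
Definition posnat (x : k) := exists2 c : nat, (0 < c)%N & x = c%:R.

Lemma natset_term (q : P) (m : M) (j : 'I_n.+1) : (forall m, natset q@_m) ->
  natset (if (U_(inord j.+1) <= m)%MM
      then q@_(m - U_(inord j.+1) + U_(j))%MM *+ ((m - U_(inord j.+1))%MM j).+1 *+ (n - j)
      else 0).
Proof.
move=> h; case: ifP => _; last by exists 0%N.
case: (h (m - U_(inord j.+1) + U_(j))%MM) => c ->.
by exists (c * ((m - U_(inord j.+1))%MM j).+1 * (n - j))%N; rewrite !natrM !mulr_natr.
Qed.

Lemma natset_sum (I : finType) (Pr : pred I) (f : I -> k) :
  (forall i, Pr i -> natset (f i)) -> natset (\sum_(i | Pr i) f i).
Proof.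
move=> h; apply: (big_ind natset) => //; first by exists 0%N.
by move=> x y [c1 ->] [c2 ->]; exists (c1 + c2)%N; rewrite natrD.
Qed.

Lemma natset_D (q : P) : (forall m, natset q@_m) -> forall m, natset (Dtilde q)@_m.
Proof. by move=> h m; rewrite coefD; apply: natset_sum => j _; apply: natset_term. Qed.

Lemma natset_T l (q : P) : (forall m, natset q@_m) -> forall m, natset (tlD l q)@_m.
Proof.
move=> h m; rewrite coefT; case: ifP => _; last by exists 0%N.
exact: natset_D.
Qed.

Lemma natset_iter l i (q : P) : (forall m, natset q@_m) -> forall m, natset (iter i (tlD l) q)@_m.
Proof. by elim: i => //= i IH h; apply: natset_T; apply: IH. Qed.

Lemma natset_X (m0 : M) m : natset ('X_[m0] : P)@_m.
Proof. by rewrite mcoeffX; exists (nat_of_bool (m0 == m)). Qed.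

Lemma posnat_step l (q : P) (mm : M) (j : 'I_n.+1) : (forall m, natset q@_m) ->
  (0 < j < n)%N -> posnat q@_(mm + U_(j))%MM ->
  posnat (tlD l q)@_(mm + U_(inord j.+1) + U_(ord0) *+ l)%MM.
Proof.
move=> hq hj [c c0 ec].
rewrite coefT lem_addl addmK coefD (bigD1 j) //=.
rewrite lem_addl addmK ec.
have [d ->] : natset (\sum_(i < n.+1 | (0 < i < n)%N && (i != j))
     (if (U_(inord i.+1) <= mm + U_(inord j.+1))%MM
      then q@_(mm + U_(inord j.+1) - U_(inord i.+1) + U_(i))%MM *+
           ((mm + U_(inord j.+1) - U_(inord i.+1))%MM i).+1 *+ (n - i)
      else 0)).
  by apply: natset_sum => i _; apply: natset_term.
exists (c * (mm j).+1 * (n - j) + d)%N.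
  have : (0 < n - j)%N by lia.
  move: c0; rewrite !addn_gt0 !muln_gt0 => -> ->; done.
by rewrite natrD !natrM !mulr_natr.
Qed.

End Nat.

Section Aux2.
Variables (k : fieldType) (n : nat).
Local Notation M := ('X_{1..n.+1}).
Local Notation P := {mpoly k[n.+1]}.

Lemma exists_j (m : M) : (Wt m < n * S m)%N ->
  exists j : 'I_n.+1, (0 < j < n)%N && (0 < m j)%N.
Proof.
move=> h; case: (pickP (fun j : 'I_n.+1 => (0 < j < n)%N && (0 < m j)%N)) => [j hj|h0].
  by exists j.
exfalso; suff : (n * S m <= Wt m)%N by lia.
rewrite /Wt /S /F big_distrr; apply: leq_sum => i _; move: (h0 i).
rewrite /w3; case: i => [[|i] hi] /= hh; first lia.
move: hh; case: (ltnP i.+1 n) => hin /=.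
  by move/negbT; rewrite -leqNgt leqn0 => /eqP ->; rewrite muln0.
move=> _; nia.
Qed.

Lemma mon_t_xE a j b : (0 < j <= n)%N ->
  mon_t_x n a j b = (U_(ord0) *+ a + U_(inord j) *+ b)%MM.
Proof.
move=> hj; apply/mnmP => i; rewrite mnmE mnmDE !mulmnE !mnm1E -!val_eqE /= inordK; last lia.
case: i => [[|i] hi] /=; first lia.
case: eqP => [->|e]; first by rewrite eqxx; lia.
have -> : (j == i.+1) = false by apply/eqP => e'; apply: e.
lia.
Qed.

Lemma F_mon w a j b : (0 < j <= n)%N ->
  F w (mon_t_x n a j b) = (w 0 * a + w j * b)%N.
Proof.
move=> hj; rewrite mon_t_xE // F_add !F_mul !F_U /= inordK //; lia.
Qed.

Lemma top_eq (m : M) a b : (0 < n)%N ->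
  (forall j : 'I_n.+1, (0 < j < n)%N -> m j = 0%N) -> T m = a -> S m = b ->
  m = mon_t_x n a n b.
Proof.
move=> n0 hz hT hS; apply/mnmP => i; rewrite mnmE.
case: i => [[|i] hi] /=.
  by rewrite -hT /T; congr (m _); apply: val_inj.
case: ifP => /eqP e.
  have -> : Ordinal hi = ord_max by apply: val_inj => /=; lia.
  rewrite -hS /S /F -(sum_ind ord_max (fun i => m i)) /=.
  apply: eq_bigr => j _; rewrite /w3; case: j => [[|j] hj] /=.
    by rewrite muln0 (_ : (0 == n)%N = false) //; apply/eqP; lia.
  case: (ltnP j.+1 n) => hjn.
    have -> : (j.+1 == n)%N = false by apply/eqP; lia.
    by rewrite (hz (Ordinal hj)) //= mul0n muln1.
  have -> : (j.+1 == n)%N by apply/eqP; lia.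
  by rewrite muln1 mul1n.
by apply: hz => /=; lia.
Qed.

Lemma chain l (m0 : M) i : Wt m0 = S m0 -> (i <= (n - 1) * S m0)%N ->
  exists m : M, [/\ T m = (T m0 + i * l)%N, S m = S m0, Wt m = (Wt m0 + i)%N &
      posnat (iter i (tlD l) ('X_[m0] : P))@_m].
Proof.
move=> hW; elim: i => [|i IH] hi.
  exists m0; split; try lia.
  by exists 1%N => //; rewrite /= mcoeffX eqxx.
have [m [e1 e2 e3 hp]] := IH (ltnW hi).
have [j /andP [hj hmj]] : exists j : 'I_n.+1, (0 < j < n)%N && (0 < m j)%N.
  apply: exists_j; rewrite e3 e2 hW.
  have : (0 < n - 1)%N by move: hi; case: (n - 1)%N.
  nia.
set mm := (m - U_(j))%MM.
have em : m = (mm + U_(j))%MM by rewrite /mm submK // lep1mP -lt0n.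
have jn : (j < n)%N by lia.
have j0 : (nat_of_ord j == 0%N) = false by apply/eqP; lia.
have eT : T m = T mm by rewrite em !T_F F_add F_U /= j0 addn0.
have eS : S m = (S mm).+1 by rewrite em /S F_add F_U /w3 j0 addn1.
have eW : Wt m = (Wt mm + j)%N by rewrite em /Wt F_add F_U.
exists (mm + U_(inord j.+1) + U_(ord0) *+ l)%MM; split.
- rewrite T_F FU3 // -T_F /=; lia.
- rewrite /S FU3 //; rewrite /S in eS e2; rewrite {2 3}/w3 /=; lia.
- rewrite /Wt FU3 // /=; rewrite /Wt in eW e3; lia.
rewrite iterS; apply: posnat_step => //; first by apply: natset_iter => m'; apply: natset_X.
by rewrite -em.
Qed.

End Aux2.

Section Main.
Variables (k : fieldType) (hk : [pchar k] =i pred0) (n : nat) (hn : (3 <= n)%N)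
  (l : nat) (hl : (1 <= l)%N) (a b : nat) (ha : (1 <= a)%N) (hb : (1 <= b)%N)
  (p : {mpoly k[n.+1]}).
Local Notation M := ('X_{1..n.+1}).
Local Notation P := {mpoly k[n.+1]}.
Local Notation mst := (mon_t_x n a 1 b).
Hypotheses (hw3 : (wdeg w3 p <= b)%N) (hmst : mst \in msupp p)
  (hlt : forall m, m \in msupp p -> m <> mst -> lexlt m mst).

Let a' := (a + (n - 1) * l * b)%N.
Let N := ((n - 1) * b)%N.

Lemma natnz c : (0 < c)%N -> (c%:R : k) != 0.
Proof. by move=> c0; apply/negP => /(natf0_pchar c0) [q]; rewrite hk. Qed.

Lemma posnz (x : k) : posnat x -> x != 0.
Proof. by case=> c c0 ->; apply: natnz. Qed.

Lemma Tmst : T mst = a.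
Proof. rewrite T_F F_mon /=; lia. Qed.
Lemma Smst : S mst = b.
Proof. rewrite /S F_mon /w3 /=; lia. Qed.
Lemma Wmst : Wt mst = b.
Proof. rewrite /Wt F_mon /=; lia. Qed.

Lemma mstE i : mst i = if (i == 0 :> nat) then a else if (i == 1 :> nat) then b else 0%N.
Proof. by rewrite mnmE. Qed.

Lemma Q1 (m : M) : p@_m != 0 -> (S m <= b)%N.
Proof.
rewrite -mcoeff_msupp => hm; move/bigmax_leqP_seq: hw3 => h.
exact: (h m hm).
Qed.

Lemma Q2 (m : M) : p@_m != 0 -> (T m <= a)%N /\ (T m = a -> S m = b -> Wt m = b -> m = mst).
Proof.
rewrite -mcoeff_msupp => hm.
case: (m =P mst) => [->|ne]; first by rewrite Tmst.
have [[[|[|i]] hi] [hbef hl']] := hlt hm ne; rewrite mstE /= in hl'.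
- have e : Ordinal hi = ord0 by apply: val_inj.
  by rewrite e in hl'; split; rewrite /T; lia.
- have e0 := hbef ord0 isT; rewrite mstE /= in e0.
  split; first by rewrite /T e0.
  move=> _ hS hW; have h13 : (1 < n)%N by lia. have := I3 m h13.
  have e : Ordinal hi = inord 1 by apply: val_inj; rewrite /= inordK.
  rewrite -e hS hW; lia.
- by [].
Qed.

Lemma reach (m m' : M) i : p@_m != 0 ->
  T m' = (T m + i * l)%N -> S m' = S m -> Wt m' = (Wt m + i)%N ->
  [/\ (T m' <= a')%N, (F w1 m' <= a' + b)%N,
      (F (w2 n) m' <= (n - 2) * a' + (n - 1) * b)%N &
      (T m' = a' -> [/\ i = N, m = mst & m' = mon_t_x n a' n b])].
Proof.
move=> hm eT eS eW.
have hS := Q1 hm; have [hT hQ] := Q2 hm.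
have i1 := I1 m; have i2 := I2 m'.
rewrite eS eW in i2.
have h1n : (1 <= n)%N by lia.
have hi : (i <= (n - 1) * S m)%N by apply: (@num1 n _ _ _ h1n i1 i2).
have [hT1 hT2] := @numT n l _ _ _ _ _ hT hi hS.
have hTm : (T m' <= a')%N by rewrite eT /a'.
split => //.
- by rewrite L_w1 eT eS /a'.
- have e2 := L_w2 m'; rewrite eT eS eW in e2.
  exact: (@num2' n l _ _ _ _ _ _ _ hn hl hT hS i1 hi e2).
move=> hTa.
have h2n : (2 <= n)%N by lia.
have hTa' : (T m + i * l = a + (n - 1) * l * b)%N by rewrite -eT.
have [iN Tma Smb] := @numTop n l _ _ _ _ _ h2n hl hT hi hS hTa'.
have Wmb : Wt m = b.
  rewrite iN Smb in i2; rewrite Smb in i1.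
  exact: (@numW n _ _ h1n i1 i2).
have mE := hQ Tma Smb Wmb.
split => //.
apply: top_eq; [lia | | exact: hTa | by rewrite eS].
move=> j hj; have := I4 m' hj; rewrite eW eS; lia.
Qed.

Lemma eps_coef (m : M) : (eps_t l p)@_m =
  \sum_(i < (msize p * n).+1) ((i`!%:R)^-1 * (iter i (tlD l) p)@_m).
Proof. by rewrite /eps_t raddf_sum; apply: eq_bigr => i _; rewrite /= mcoeffZ. Qed.

Lemma eps_supp (m' : M) : (eps_t l p)@_m' != 0 ->
  exists i m, [/\ p@_m != 0, T m' = (T m + i * l)%N, S m' = S m & Wt m' = (Wt m + i)%N].
Proof.
rewrite eps_coef => /sum_neq0 [i /= hi].
have : (iter i (tlD l) p)@_m' != 0 by apply: contraNneq hi => ->; rewrite mulr0.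
by move/iter_supp => [m0 [h1 h2 h3 h4]]; exists i, m0; split.
Qed.

Let Mp := mon_t_x n a' n b.

Lemma coef_top : (eps_t l p)@_Mp != 0.
Proof.
have TMp : T Mp = a' by rewrite T_F F_mon /=; lia.
have hNK : (N < (msize p * n).+1)%N.
  have := msize_mdeg_lt hmst.
  have -> : mdeg mst = (a + b)%N.
    rewrite mdegE; transitivity (F w1 mst); last by rewrite L_w1 Tmst Smst.
    by rewrite /F; apply: eq_bigr => i _; rewrite muln1.
  move=> hs; have hb' : (b <= msize p)%N by lia.
  rewrite ltnS /N; apply: leq_trans (leq_mul (leq_subr 1 n) hb') _; by rewrite mulnC.
rewrite eps_coef (bigD1 (Ordinal hNK)) //= big1 ?addr0; last first.
  move=> i hi; apply/eqP; rewrite mulf_eq0; apply/orP; right; apply/eqP.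
  apply/eqP; apply: contraTT hi => /iter_supp [m [h1 h2 h3 h4]].
  have [_ _ _ h5] := reach h1 h2 h3 h4.
  have [iN _ _] := h5 TMp.
  by rewrite negbK; apply/eqP; apply: val_inj.
rewrite mulf_eq0 negb_or invr_eq0 natnz ?fact_gt0 //=.
set c := p@_mst.
have ep : p = c *: 'X_[mst] + (p - c *: 'X_[mst]) by rewrite addrC subrK.
rewrite ep iter_add iter_scale mcoeffD mcoeffZ.
rewrite (_ : (iter N (tlD l) (p - c *: 'X_[mst]))@_Mp = 0) ?addr0; last first.
  apply/eqP; apply: contraT => /iter_supp [m [h1 h2 h3 h4]].
  move: h1; rewrite mcoeffB mcoeffZ mcoeffX.
  case: (mst =P m) => [<-|ne]; first by rewrite mulr1 subrr eqxx.
  rewrite /= mulr0n mulr0 subr0 => h1.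
  have [_ _ _ h5] := reach h1 h2 h3 h4.
  by have [_ e _] := h5 TMp; case: ne.
rewrite mulf_eq0 negb_or -mcoeff_msupp hmst /=.
have hW0 : Wt mst = S mst by rewrite Wmst Smst.
have hN0 : (N <= (n - 1) * S mst)%N by rewrite Smst.
have [m [e1 e2 e3 hp]] := @chain k n l mst N hW0 hN0.
have hm0 : p@_mst != 0 by rewrite -mcoeff_msupp.
have [_ _ _ h5] := reach hm0 e1 e2 e3.
have hTm : T m = a' by rewrite e1 Tmst /a' /N; lia.
have [_ _ em] := h5 hTm.
by rewrite /Mp -em; apply: posnz.
Qed.

End Main.

Theorem lemma5p3 (k : fieldType) (hk : [pchar k] =i pred0) (n : nat)
  (hn : (3 <= n)%N) (l : nat) (hl : (1 <= l)%N) (a b : nat)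
  (ha : (1 <= a)%N) (hb : (1 <= b)%N) (p : {mpoly k[n.+1]}) :
  inQab a b p -> inPab (a + (n - 1) * l * b) b (eps_t l p).
Proof.
case=> hp0 hw3 [hmst hlt].
have ct := coef_top hk hn hl ha hb hw3 hmst hlt.
split.
- by apply: contraNneq ct => ->; rewrite mcoeff0.
- apply/bigmax_leqP_seq => m' hm' _; rewrite mcoeff_msupp in hm'.
  have [i [m [h1 h2 h3 h4]]] := eps_supp hm'.
  by have [_ h _ _] := reach hn hl ha hb hw3 hmst hlt h1 h2 h3 h4.
- apply/bigmax_leqP_seq => m' hm' _; rewrite mcoeff_msupp in hm'.
  have [i [m [h1 h2 h3 h4]]] := eps_supp hm'.
  by have [_ _ h _] := reach hn hl ha hb hw3 hmst hlt h1 h2 h3 h4.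
split; first by rewrite mcoeff_msupp.
move=> m' hm' ne; rewrite mcoeff_msupp in hm'.
have [i [m [h1 h2 h3 h4]]] := eps_supp hm'.
have [hT _ _ h5] := reach hn hl ha hb hw3 hmst hlt h1 h2 h3 h4.
exists ord0; split; first by move=> j; rewrite ltn0.
rewrite mnmE /=.
case: (T m' =P (a + (n - 1) * l * b)%N) => e.
  by have [_ _ em] := h5 e; case: ne.
by rewrite /T in hT e; lia.
Qed.
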